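(* For every monotone submodular $f:2^{[2]}\to\mathbb{R}_+$ and every $\mathbf{x}\in[0,1]^2$, $f^{+}(\mathbf{x})/f^{++}(\mathbf{x})\le 4/3$ (with the convention $0/0=1$).
   Context: $[n]=\{1,\dots,n\}$. A set function $f:2^{[n]}\to\mathbb{R}_+$ is monotone if $f(S)\le f(T)$ for $S\subseteq T$, submodular if $f(S)+f(T)\ge f(S\cap T)+f(S\cup T)$. For $\mathbf{x}\in[0,1]^n$: the concave closure $f^{+}(\mathbf{x})=\max\sum_{S\subseteq[n]}\theta(S)f(S)$ over $\theta:2^{[n]}\to\mathbb{R}_{\ge0}$ with $\sum_S\theta(S)=1$ and $\sum_{S\ni i}\theta(S)=x_i$ for all $i$; the upper pairwise independent extension $f^{++}(\mathbf{x})$ is the same maximum with the additional constraints $\sum_{S\ni i,j}\theta(S)=x_ix_j$ for all $i<j$. *)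

(* Defs.v *)
From mathcomp Require Import all_boot all_order all_algebra.
From mathcomp Require Import classical_sets reals.
Set Implicit Arguments. Unset Strict Implicit. Unset Printing Implicit Defensive.
Import Order.TTheory GRing.Theory Num.Theory.
Local Open Scope ring_scope.
Local Open Scope classical_set_scope.

Section Defs.
Variables (R : realType) (n : nat).

Definition nonneg_setfun (f : {set 'I_n} -> R) : Prop :=
  forall S, 0 <= f S.

Definition monotone_setfun (f : {set 'I_n} -> R) : Prop :=
  forall S T : {set 'I_n}, S \subset T -> f S <= f T.

Definition submodular (f : {set 'I_n} -> R) : Prop :=
  forall S T : {set 'I_n}, f (S :&: T) + f (S :|: T) <= f S + f T.

Definition concave_feasible (x : 'I_n -> R) (th : {set 'I_n} -> R) : Prop :=
  (forall S, 0 <= th S) /\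
  \sum_(S : {set 'I_n}) th S = 1 /\
  (forall i : 'I_n, \sum_(S : {set 'I_n} | i \in S) th S = x i).

Definition pairwise_feasible (x : 'I_n -> R) (th : {set 'I_n} -> R) : Prop :=
  concave_feasible x th /\
  (forall i j : 'I_n, (i < j)%N ->
     \sum_(S : {set 'I_n} | (i \in S) && (j \in S)) th S = x i * x j).

Definition objective (f : {set 'I_n} -> R) (th : {set 'I_n} -> R) : R :=
  \sum_(S : {set 'I_n}) th S * f S.

(* concave closure f^+(x): the maximum (= supremum, the feasible set being a
   nonempty compact polytope) of the objective over concave_feasible x *)
Definition concave_closure (f : {set 'I_n} -> R) (x : 'I_n -> R) : R :=
  sup [set objective f th | th in concave_feasible x].

Definition upper_pairwise_ext (f : {set 'I_n} -> R) (x : 'I_n -> R) : R :=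
  sup [set objective f th | th in pairwise_feasible x].

End Defs.

(* Main.v *)
Require Import Defs.
From mathcomp Require Import all_boot all_order all_algebra.
From mathcomp Require Import classical_sets reals.
From mathcomp Require Import lra.
Import Order.TTheory GRing.Theory Num.Theory.
Local Open Scope ring_scope.

Lemma sup_max (R : realType) (E : set R) m :
  E m -> (forall y, E y -> y <= m) -> sup E = m.
Proof.
move=> Em ub; apply/le_anti/andP; split.
  by apply: ge_sup; [exists m|].
by apply: (sup_upper_bound _ Em); split; [exists m| exists m].
Qed.

Lemma setI2_eq (S T : {set 'I_2}) :
  (ord0 \in S) = (ord0 \in T) -> ((@ord_max 1) \in S) = (ord_max \in T) -> S = T.
Proof.
move=> h0 h1; apply/setP => i.
case: i => [[|[|k]] Hk] //.
- by rewrite (_ : Ordinal Hk = ord0) //; apply: val_inj.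
- by rewrite (_ : Ordinal Hk = ord_max) //; apply: val_inj.
Qed.

Lemma sum4 (R : realType) (g : {set 'I_2} -> R) :
  \sum_S g S = g (finset.set0 : {set 'I_2}) + g [set ord0] + g [set ord_max] + g [set: 'I_2].
Proof.
rewrite (bigID (fun S : {set 'I_2} => ord0 \in S)) /=.
rewrite (bigID (fun S : {set 'I_2} => ord_max \in S)) /=.
rewrite [X in _ + X](bigID (fun S : {set 'I_2} => ord_max \in S)) /=.
rewrite (big_pred1 [set: 'I_2]); last first.
  move=> S; apply/idP/eqP => [/andP[h0 h1]|->]; last by rewrite !inE.
  by apply: setI2_eq; rewrite ?inE.
rewrite (big_pred1 [set ord0]); last first.
  move=> S; apply/idP/eqP => [/andP[h0 h1]|->]; last by rewrite !inE.
  apply: setI2_eq; rewrite ?inE ?h0 //.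
  by transitivity false; [apply/negbTE; exact: h1|].
rewrite (big_pred1 [set ord_max]); last first.
  move=> S; apply/idP/eqP => [/andP[h0 h1]|->]; last by rewrite !inE.
  apply: setI2_eq; rewrite ?inE ?h1 //.
  by transitivity false; [apply/negbTE; exact: h0|].
rewrite (big_pred1 (finset.set0 : {set 'I_2})); last first.
  move=> S; apply/idP/eqP => [/andP[h0 h1]|->]; last by rewrite !inE.
  apply: setI2_eq; rewrite ?inE.
  by transitivity false; [apply/negbTE; exact: h0|].
  by transitivity false; [apply/negbTE; exact: h1|].
lra.
Qed.

Lemma sum4P (R : realType) (P : pred {set 'I_2}) (g : {set 'I_2} -> R) :
  \sum_(S | P S) g S = (if P finset.set0 then g finset.set0 else 0)
   + (if P [set ord0] then g [set ord0] else 0)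
   + (if P [set ord_max] then g [set ord_max] else 0)
   + (if P [set: 'I_2] then g [set: 'I_2] else 0).
Proof. by rewrite big_mkcond sum4. Qed.

Lemma ord2_cases (i : 'I_2) : i = ord0 \/ i = ord_max.
Proof.
case: i => [[|[|k]] Hk] //.
- by left; apply: val_inj.
- by right; apply: val_inj.
Qed.

Lemma memE : ((ord0 : 'I_2) \in [set ord_max]) = false /\ ((@ord_max 1) \in [set ord0]) = false
  /\ ((ord0 : 'I_2) \in [set ord0]) /\ ((@ord_max 1) \in [set ord_max])
  /\ ((ord0 : 'I_2) \in [set: 'I_2]) /\ ((@ord_max 1) \in [set: 'I_2])
  /\ ((ord0 : 'I_2) \in finset.set0) = false /\ ((@ord_max 1) \in finset.set0) = false.
Proof. by rewrite !inE. Qed.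


Theorem mainTheorem4 (R : realType) (f : {set 'I_2} -> R) (x : 'I_2 -> R) :
  nonneg_setfun f -> monotone_setfun f -> submodular f ->
  (forall i, 0 <= x i <= 1) ->
  (upper_pairwise_ext f x = 0 -> concave_closure f x = 0) /\
  (upper_pairwise_ext f x != 0 ->
     concave_closure f x / upper_pairwise_ext f x <= 4 / 3).
Proof.
move=> nn mono sub hx.
have [m1 [m2 [m3 [m4 [m5 [m6 [m7 m8]]]]]]] := memE.
set a := f finset.set0; set b := f [set ord0]; set c := f [set ord_max].
set d := f [set: 'I_2]; set p := x ord0; set q := x ord_max.
have ha : 0 <= a by apply: nn.
have hbd : b <= d by apply: mono; apply: finset.subsetT.
have hcd : c <= d by apply: mono; apply: finset.subsetT.
have hD : a + d <= b + c.
  have := sub [set ord0] [set ord_max].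
  have -> : [set ord0 : 'I_2] :&: [set ord_max : 'I_2] = finset.set0.
    by apply: setI2_eq; rewrite !inE ?m1 ?m2 ?m7 ?m8 ?m3 ?m4.
  have -> : [set ord0 : 'I_2] :|: [set ord_max : 'I_2] = [set: 'I_2].
    by apply: setI2_eq; rewrite !inE.
  by [].
have /andP[hp0 hp1] := hx ord0; have /andP[hq0 hq1] := hx ord_max.
rewrite -/p in hp0 hp1; rewrite -/q in hq0 hq1.
have objE : forall th : {set 'I_2} -> R, objective f th =
   th finset.set0 * a + th [set ord0] * b + th [set ord_max] * c + th [set: 'I_2] * d.
  by move=> th; rewrite /objective sum4.
have cf : forall th, concave_feasible x th ->
  [/\ 0 <= th [set: 'I_2], p + q - 1 <= th [set: 'I_2],
      th finset.set0 = 1 - p - q + th [set: 'I_2],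
      th [set ord0] = p - th [set: 'I_2] & th [set ord_max] = q - th [set: 'I_2]].
  move=> th [hn [hs hm]].
  move: hs (hm ord0) (hm ord_max); rewrite sum4 !sum4P /= ?m1 ?m2 ?m3 ?m4 ?m5 ?m6 ?m7 ?m8.
  rewrite -/p -/q => e1 e2 e3.
  have := hn finset.set0; have := hn [set ord0]; have := hn [set ord_max]; have := hn [set: 'I_2].
  move=> *; split; lra.
have pf : forall th, pairwise_feasible x th -> th [set: 'I_2] = p * q.
  move=> th [_ h]; move: (h ord0 ord_max isT); rewrite sum4P /= ?m1 ?m2 ?m3 ?m4 ?m5 ?m6 ?m7 ?m8 /=.
  by rewrite -/p -/q => <-; rewrite !add0r.
pose w (t : R) : {set 'I_2} -> R := fun S => if ord0 \in S then
   (if ord_max \in S then t else p - t) else (if ord_max \in S then q - t else 1 - p - q + t).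
have wE : forall t, [/\ w t finset.set0 = 1 - p - q + t, w t [set ord0] = p - t,
    w t [set ord_max] = q - t & w t [set: 'I_2] = t].
  by move=> t; rewrite /w ?m1 ?m2 ?m3 ?m4 ?m5 ?m6 ?m7 ?m8.
have wf : forall t, 0 <= t -> p + q - 1 <= t -> t <= p -> t <= q -> concave_feasible x (w t).
  move=> t h1 h2 h3 h4; split; [|split].
  - by move=> S; rewrite /w; case: (ord0 \in S); case: (ord_max \in S); lra.
  - rewrite sum4. rewrite /w ?m1 ?m2 ?m3 ?m4 ?m5 ?m6 ?m7 ?m8. lra.
  - move=> i; case: (ord2_cases i) => ->; rewrite sum4P /= ?m1 ?m2 ?m3 ?m4 ?m5 ?m6 ?m7 ?m8;
    rewrite /w ?m1 ?m2 ?m3 ?m4 ?m5 ?m6 ?m7 ?m8; rewrite -/p -/q; lra.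
have wp : pairwise_feasible x (w (p * q)).
  split; first by apply: wf; nra.
  move=> i j; case: (ord2_cases i) => ->; case: (ord2_cases j) => -> // _.
  rewrite sum4P /= ?m1 ?m2 ?m3 ?m4 ?m5 ?m6 ?m7 ?m8 /=.
  rewrite /w ?m1 ?m2 ?m3 ?m4 ?m5 ?m6 ?m7 ?m8; rewrite -/p -/q; lra.
pose F := (1 - p - q + p * q) * a + (p - p * q) * b + (q - p * q) * c + (p * q) * d.
have Fv : upper_pairwise_ext f x = F.
  apply: sup_max.
    exists (w (p * q)) => //; rewrite objE; rewrite /w ?m1 ?m2 ?m3 ?m4 ?m5 ?m6 ?m7 ?m8; by [].
  move=> y [th hth <-]; rewrite objE.
  have [_ _ -> -> ->] := cf th (proj1 hth); rewrite (pf th hth); rewrite /F; lra.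
pose t0 := Num.max 0 (p + q - 1).
have ht0 : (t0 = 0 /\ p + q <= 1) \/ (t0 = p + q - 1 /\ 1 <= p + q).
  rewrite /t0; case: (lerP (p + q) 1) => h.
    by left; split => //; rewrite max_l //; lra.
  by right; split; [rewrite max_r //; lra | lra].
pose V := (1 - p - q + t0) * a + (p - t0) * b + (q - t0) * c + t0 * d.
have Vv : concave_closure f x = V.
  apply: sup_max.
    exists (w t0); last by rewrite objE; rewrite /w ?m1 ?m2 ?m3 ?m4 ?m5 ?m6 ?m7 ?m8.
    apply: wf; case: ht0 => -[-> h]; lra.
  move=> y [th hth <-]; rewrite objE.
  have [h1 h2 -> -> ->] := cf th hth.
  have h3 : t0 <= th [set: 'I_2] by case: ht0 => -[-> h]; lra.
  have hD' : 0 <= b + c - (a + d) by rewrite subr_ge0.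
  have := mulr_ge0 (ltac:(rewrite subr_ge0; exact: h3) : 0 <= th [set: 'I_2] - t0) hD'.
  rewrite /V; nra.
have key : 3 * V <= 4 * F /\ 0 <= F.
  have hD' : 0 <= b + c - (a + d) by rewrite subr_ge0.
  have hcd' : 0 <= d - c by rewrite subr_ge0.
  have hbd' : 0 <= d - b by rewrite subr_ge0.
  rewrite /V /F; case: ht0 => -[-> h].
  - have h1 := mulr_ge0 hcd' hp0.
    have h2 := mulr_ge0 hbd' hq0.
    have h4 : 0 <= (p + q) * (1 - (p + q)) by apply: mulr_ge0; lra.
    have h5 := mulr_ge0 hD' h4.
    have h6 := mulr_ge0 hD' (sqr_ge0 (p - q)).
    split; nra.
  - have h1 := mulr_ge0 hcd' hp0.
    have h2 := mulr_ge0 hbd' hq0.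
    have h4 : 0 <= 1 - (2 - p - q) ^+ 2 by nra.
    have h5 := mulr_ge0 hD' h4.
    have h6 := mulr_ge0 hD' (sqr_ge0 (p - q)).
    split; nra.
have V0 : 0 <= V.
  have hb : 0 <= b by apply: nn.
  have hc : 0 <= c by apply: nn.
  have hd : 0 <= d by apply: nn.
  rewrite /V; case: ht0 => -[-> h].
  - have := mulr_ge0 (ltac:(lra) : 0 <= 1 - p - q) ha.
    have := mulr_ge0 hp0 hb; have := mulr_ge0 hq0 hc; nra.
  - have := mulr_ge0 (ltac:(lra) : 0 <= 1 - q) hb.
    have := mulr_ge0 (ltac:(lra) : 0 <= 1 - p) hc.
    have := mulr_ge0 (ltac:(lra) : 0 <= p + q - 1) hd; nra.
rewrite Fv Vv; case: key => k1 k2; split.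
  by move=> F0; apply/eqP; rewrite eq_le V0 andbT; rewrite F0 in k1; lra.
move=> Fn0; have Fp : 0 < F by rewrite lt_def Fn0 k2.
rewrite ler_pdivrMr //; lra.
Qed.
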